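(* Let $F$ be a finite field of characteristic $3$. Let $k\ge 0$ be an integer, $m=3k+1$, and $t$ an integer with $t^3\equiv 1\pmod m$ and $\gcd(m,t-1)=1$. Let $G=T_{3m}=\langle x,y\mid x^m=y^3=1,\ y^{-1}xy=x^t\rangle$ (of order $3m$), $FG$ its group algebra, and $H=\langle x\rangle$. Then $Z(\Delta(G,H))\subseteq Z(FG)$.
   Context: $\Delta(G,H)$ is the ideal of $FG$ generated by $\{h-1\mid h\in H\}$; $Z(R)$ denotes the center of a ring $R$, i.e. the set of elements of $R$ commuting with all elements of $R$. *)

(* Defs.v *)
From HB Require Import structures.
From mathcomp Require Import all_boot all_order all_algebra all_fingroup.
Set Implicit Arguments. Unset Strict Implicit. Unset Printing Implicit Defensive.
Import GRing.Theory.
Local Open Scope ring_scope.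

(* The group algebra F G of a finite group G (taken as the whole carrier
   type gT) is represented by functions gT -> F (coefficient vectors);
   addition is pointwise and multiplication is convolution. *)
Definition galg (F : nzRingType) (gT : finGroupType) := {ffun gT -> F}.

Definition gmul (F : nzRingType) (gT : finGroupType) (a b : {ffun gT -> F})
  : {ffun gT -> F} :=
  [ffun g => \sum_(h : gT) a h * b (h^-1 * g)%g].

Definition gelt (F : nzRingType) (gT : finGroupType) (g : gT) : {ffun gT -> F} :=
  [ffun z => (z == g)%:R].

(* Delta(G,H): the two-sided ideal of F G generated by {h - 1 | h in H},
   i.e. the set of finite sums  sum_i a_i (h_i - 1) b_i. *)
Definition Delta (F : nzRingType) (gT : finGroupType) (H : {set gT})
  (al : {ffun gT -> F}) : Prop :=
  exists n (a b : 'I_n -> {ffun gT -> F}) (s : 'I_n -> gT),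
    (forall i, s i \in H) /\
    al = \sum_(i < n) gmul (gmul (a i) (gelt F (s i) - gelt F 1%g)) (b i).

(* Main.v *)
Require Import Defs.
From HB Require Import structures.
From mathcomp Require Import all_boot all_order all_algebra all_fingroup.
Import GRing.Theory.
Local Open Scope ring_scope.
From mathcomp Require Import ring cyclic.
Set Implicit Arguments. Unset Strict Implicit. Unset Printing Implicit Defensive.
Section GAlg.
Variables (F : comNzRingType) (gT : finGroupType).
Implicit Types (a b c f : {ffun gT -> F}).

Lemma gmulA a b c : gmul (gmul a b) c = gmul a (gmul b c).
Proof.
apply/ffunP=> g; rewrite !ffunE.
under eq_bigr do rewrite ffunE big_distrl.
rewrite exchange_big /=; apply: eq_bigr => k _.
rewrite ffunE big_distrr /= (reindex_inj (mulgI k)) /=.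
apply: eq_bigr => h _; rewrite mulKg invMg -mulgA mulrA //.
Qed.

Lemma gmulDl a b c : gmul (a + b) c = gmul a c + gmul b c.
Proof.
by apply/ffunP=> g; rewrite !ffunE -big_split; apply: eq_bigr => h _; rewrite ffunE mulrDl.
Qed.

Lemma gmulDr a b c : gmul a (b + c) = gmul a b + gmul a c.
Proof.
by apply/ffunP=> g; rewrite !ffunE -big_split; apply: eq_bigr => h _; rewrite ffunE mulrDr.
Qed.

Definition scf (k : F) a : {ffun gT -> F} := [ffun z => k * a z].
Lemma gmulZl (k : F) a b : gmul (scf k a) b = scf k (gmul a b).
Proof.
by apply/ffunP=> g; rewrite !ffunE big_distrr; apply: eq_bigr => h _; rewrite !ffunE /= mulrA.
Qed.

Lemma gmulZr (k : F) a b : gmul a (scf k b) = scf k (gmul a b).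
Proof.
apply/ffunP=> g; rewrite !ffunE big_distrr; apply: eq_bigr => h _.
by rewrite !ffunE mulrCA.
Qed.

Lemma gmulNl a b : gmul (- a) b = - gmul a b.
Proof.
have ->: - a = scf (-1) a by apply/ffunP=> z; rewrite !ffunE mulN1r.
by rewrite gmulZl; apply/ffunP=> z; rewrite !ffunE mulN1r.
Qed.
Lemma gmulNr a b : gmul a (- b) = - gmul a b.
Proof.
have ->: - b = scf (-1) b by apply/ffunP=> z; rewrite !ffunE mulN1r.
by rewrite gmulZr; apply/ffunP=> z; rewrite !ffunE mulN1r.
Qed.
Lemma gmulBl a b c : gmul (a - b) c = gmul a c - gmul b c.
Proof. by rewrite gmulDl gmulNl. Qed.
Lemma gmulBr a b c : gmul a (b - c) = gmul a b - gmul a c.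
Proof. by rewrite gmulDr gmulNr. Qed.
Lemma gmul0l a : gmul 0 a = 0.
Proof. by apply/ffunP=> g; rewrite !ffunE big1 // => h _; rewrite ffunE mul0r. Qed.
Lemma gmul0r a : gmul a 0 = 0.
Proof. by apply/ffunP=> g; rewrite !ffunE big1 // => h _; rewrite ffunE mulr0. Qed.

Lemma gmul_suml n (a : 'I_n -> {ffun gT -> F}) b :
  gmul (\sum_(i < n) a i) b = \sum_(i < n) gmul (a i) b.
Proof.
elim/big_rec2: _ => [|i x y _ <-]; first exact: gmul0l.
by rewrite gmulDl.
Qed.

Lemma gmul_geltl (g : gT) f : gmul (gelt F g) f = [ffun z => f (g^-1 * z)%g].
Proof.
apply/ffunP=> z; rewrite !ffunE (bigD1 g) //= big1 ?addr0.
  by rewrite ffunE eqxx mul1r.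
by move=> h /negbTE hg; rewrite ffunE hg mul0r.
Qed.

Lemma gmul1l f : gmul (gelt F 1%g) f = f.
Proof. by apply/ffunP=> z; rewrite gmul_geltl ffunE invg1 mul1g. Qed.

End GAlg.
Section Main.
Variables (F : fieldType) (gT : finGroupType) (H : {group gT}).
Hypothesis nH : forall z, (z \in 'N(H))%g.
Hypothesis cH : (#|H|%:R : F) != 0.

Definition E : {ffun gT -> F} := [ffun z => (z \in H)%:R].

Lemma Ecomm f : gmul E f = gmul f E.
Proof.
apply/ffunP=> z; rewrite !ffunE.
rewrite (reindex_inj (h := fun w => z * w^-1)%g); last first.
  by move=> w1 w2 /= /mulgI /invg_inj.
apply: eq_bigr => w _; rewrite !ffunE /= invMg invgK -mulgA mulVg mulg1.
by rewrite -(memJ_norm _ (nH z)) conjgE mulgA mulKg mulrC.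
Qed.

Lemma geltE s : s \in H -> gmul (gelt F s - gelt F 1%g) E = 0.
Proof.
move=> sH; rewrite gmulBl gmul1l gmul_geltl; apply/ffunP=> z.
by rewrite !ffunE groupMl ?groupV // subrr.
Qed.

Lemma DeltaE al : Delta H al -> gmul al E = 0.
Proof.
case=> n [a [b [s [sH ->]]]]; rewrite gmul_suml big1 // => i _.
by rewrite gmulA -Ecomm -gmulA (gmulA (a i)) geltE // gmul0r gmul0l.
Qed.

Lemma DeltaB be : Delta H (be - scf (#|H|%:R^-1) (gmul E be)).
Proof.
exists #|H|, (fun _ => scf (- #|H|%:R^-1) (gelt F 1%g)), (fun _ => be),
  (fun i => enum_val i); split; first by move=> i; exact: enum_valP.
apply/ffunP=> z; rewrite sum_ffunE.
under eq_bigr do rewrite !gmulZl gmul1l gmulBl gmul1l gmul_geltl !ffunE.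
rewrite -(big_enum_val (A := mem H) (fun h => - #|H|%:R^-1 * (be (h^-1 * z)%g - be z))) /=.
rewrite -big_distrr /= sumrB sumr_const !ffunE.
rewrite [in RHS]big_mkcond /=.
under eq_bigr do rewrite ffunE; rewrite -/(#|H|) -mulr_natr.
have -> : \sum_h ((h \in H)%:R * be (h^-1 * z)%g) =
  \sum_h (if h \in mem H then be (h^-1 * z)%g else 0).
  by apply: eq_bigr => h _; case: (h \in H); rewrite ?mul1r ?mul0r.
by field.
Qed.

Lemma central_Delta (al : {ffun gT -> F}) : Delta H al ->
  (forall be, Delta H be -> gmul al be = gmul be al) ->
  forall be, gmul al be = gmul be al.
Proof.
move=> Dal Hc be.
have e1 : be = (be - scf (#|H|%:R^-1) (gmul E be)) + scf (#|H|%:R^-1) (gmul E be)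
  by rewrite subrK.
rewrite e1 gmulDr gmulDl (Hc _ (DeltaB be)) !gmulZr !gmulZl.
rewrite -gmulA.
have h0 := DeltaE Dal. rewrite h0 gmul0l Ecomm gmulA [gmul E al]Ecomm h0 gmul0r.
by congr (_ + _); apply/ffunP=> z; rewrite !ffunE mulr0.
Qed.

End Main.
Theorem proposition3p11 (F : finFieldType) (gT : finGroupType)
    (k : nat) (t : int) (x y : gT) :
  (3 \in [pchar F])%N ->
  (t ^+ 3 == 1 %[mod (3 * k + 1)%N])%Z ->
  gcdz (3 * k + 1)%N (t - 1) = 1%N ->
  (<<[set x; y]>> = [set: gT])%g ->
  #|gT| = (3 * (3 * k + 1))%N ->
  (x ^+ (3 * k + 1) = 1)%g -> (y ^+ 3 = 1)%g ->
  (x ^ y = x ^+ `|(t %% (3 * k + 1)%N)%Z|%N)%g ->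
  forall al : {ffun gT -> F},
    Delta <[x]>%g al ->
    (forall be, Delta <[x]>%g be -> gmul al be = gmul be al) ->
    forall be : {ffun gT -> F}, gmul al be = gmul be al.
Proof.
move=> ch3 _ _ gen _ xm _ xy al Dal Hc be.
apply: (central_Delta (H := <[x]>%G)) => //.
- move=> z; have : (z \in <<[set x; y]>>)%g by rewrite gen inE.
  apply/subsetP; rewrite gen_subG; apply/subsetP => w; rewrite !inE.
  case/orP=> /eqP ->.
    by rewrite -cycleJ conjgE mulKg.
  by rewrite -cycleJ xy cycleX.
- rewrite -(dvdn_pcharf ch3); apply/negP => h3.
  have : (3 %| 3 * k + 1)%N.
    apply: dvdn_trans h3 _; rewrite order_dvdn xm //.
  by rewrite dvdn_addr ?dvdn_mulr.
Qed.
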